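(* Let $\alpha,\beta,\gamma\in\mathbb{C}$ and $k\in\mathbb{N}$, and consider the difference equation $$z_{n+1}=\frac{\alpha+\beta z_{n-k}}{\gamma-z_n},\qquad n=0,1,2,\ldots,$$ with complex initial conditions $z_{-k},\dots,z_{-1},z_0$. Let $s=\sqrt{(\beta-\gamma)^2-4\alpha}=\sqrt{-4\alpha+\beta^2-2\beta\gamma+\gamma^2}$ and let $\bar z_1=\frac{1}{2}\left(-s-\beta+\gamma\right)$, which is a fixed point of the equation. If $$\left|\frac{2\beta}{s+\beta+\gamma}\right|+\left|\frac{\gamma\left(-s-\beta+\gamma\right)-2\alpha}{2(\alpha+\beta\gamma)}\right|<1,$$ then $\bar z_1$ is locally asymptotically stable.
   Context: Here $\sqrt{\cdot}$ denotes a fixed complex square root, used consistently in all occurrences. A fixed point $\bar z$ of $z_{n+1}=f(z_n,\dots,z_{n-k})$ is a point with $\bar z=f(\bar z,\dots,\bar z)$. It is locally asymptotically stable if for every $\epsilon>0$ there is $\delta>0$ such that $|z_{-k}-\bar z|+\dots+|z_0-\bar z|<\delta$ implies $|z_n-\bar z|<\epsilon$ for all $n\ge -k$ (and solutions converge to $\bar z$), as determined via the linearization of the equation at $\bar z$. *)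

(* Defs.v *)
From Stdlib Require Import Reals.
From Coquelicot Require Import Coquelicot.
Open Scope R_scope.

(* A solution (z_n)_{n >= -k} is encoded as x : nat -> C with x m = z_{m-k}.
   So x 0, ..., x k are the initial conditions z_{-k}, ..., z_0, and the
   recurrence z_{n+1} = (alpha + beta z_{n-k}) / (gamma - z_n) becomes
   x (n+k+1) = (alpha + beta * x n) / (gamma - x (n+k)). *)
Definition is_solution (alpha beta gamma : C) (k : nat) (x : nat -> C) : Prop :=
  forall n : nat, x (n + k + 1)%nat = ((alpha + beta * x n) / (gamma - x (n + k)%nat))%C.

Definition is_fixed_point (alpha beta gamma zb : C) : Prop :=
  zb = ((alpha + beta * zb) / (gamma - zb))%C.

Definition init_dist (k : nat) (x : nat -> C) (zb : C) : R :=
  sum_f_R0 (fun i => Cmod (x i - zb)%C) k.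

Definition loc_asympt_stable (alpha beta gamma : C) (k : nat) (zb : C) : Prop :=
  (forall eps : R, 0 < eps -> exists delta : R, 0 < delta /\
     forall x : nat -> C, is_solution alpha beta gamma k x ->
       init_dist k x zb < delta -> forall n : nat, Cmod (x n - zb)%C < eps)
  /\
  (exists delta : R, 0 < delta /\
     forall x : nat -> C, is_solution alpha beta gamma k x ->
       init_dist k x zb < delta ->
       forall eps : R, 0 < eps -> exists N : nat, forall n : nat, (N <= n)%nat ->
         Cmod (x n - zb)%C < eps).

(* Main.v *)
Require Import Defs.
From Stdlib Require Import Reals.
From Coquelicot Require Import Coquelicot.
From Stdlib Require Import Lra Lia.
Open Scope R_scope.

Lemma Cmod_rev (D e : C) : Cmod D - Cmod e <= Cmod (D - e).
Proof.
  assert (H := Cmod_triangle (D - e) e).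
  replace (D - e + e)%C with D in H by ring. lra.
Qed.

Lemma step (zb beta D eu ev : C) (B c : R) :
  D <> 0%C -> 0 <= c < 1 -> Cmod eu <= B -> Cmod ev <= B -> B <= c * Cmod D ->
  (D - eu)%C <> 0%C /\
  Cmod ((zb*eu + beta*ev)/(D - eu))%C <= (Cmod zb + Cmod beta)/(Cmod D*(1-c)) * B.
Proof.
  intros HD Hc Hu Hv HB.
  assert (HDp : 0 < Cmod D) by (apply Cmod_gt_0; auto).
  assert (Hden : (1 - c) * Cmod D <= Cmod (D - eu)).
  { assert (H := Cmod_rev D eu). nra. }
  assert (Hdp : 0 < Cmod (D - eu)) by nra.
  assert (Hne : (D - eu)%C <> 0%C).
  { intro E. rewrite E, Cmod_0 in Hdp. lra. }
  split; auto.
  rewrite Cmod_div; auto.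
  assert (Hnum : Cmod (zb*eu + beta*ev)%C <= (Cmod zb + Cmod beta) * B).
  { eapply Rle_trans. apply Cmod_triangle. rewrite !Cmod_mult.
    assert (H1 := Cmod_ge_0 zb). assert (H2 := Cmod_ge_0 beta). nra. }
  assert (Hn0 := Cmod_ge_0 (zb*eu + beta*ev)%C).
  unfold Rdiv. 
  apply Rle_trans with ((Cmod zb + Cmod beta) * B * / (Cmod D * (1 - c))).
  - apply Rle_trans with (Cmod (zb * eu + beta * ev)%C * / (Cmod D * (1 - c))).
    + apply Rmult_le_compat_l; auto. apply Rinv_le_contravar. nra. nra.
    + apply Rmult_le_compat_r; auto. left. apply Rinv_0_lt_compat. nra.
  - right. field. nra.
Qed.

Lemma sum_ge_term (f : nat -> R) (k i : nat) :
  (forall j, 0 <= f j) -> (i <= k)%nat -> f i <= sum_f_R0 f k.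
Proof.
  intros Hf. induction k; intros Hi.
  - assert (i = 0)%nat by lia. subst. simpl. lra.
  - simpl. destruct (Nat.eq_dec i (S k)).
    + subst. assert (H := cond_pos_sum f k Hf). lra.
    + specialize (Hf (S k)). assert (f i <= sum_f_R0 f k) by (apply IHk; lia). lra.
Qed.

Lemma decay (zb beta D : C) (k : nat) (e : nat -> C) (M c q : R) :
  D <> 0%C -> 0 <= c < 1 -> q = (Cmod zb + Cmod beta)/(Cmod D*(1-c)) -> q <= 1 ->
  (forall m, (D - e (m+k)%nat)%C <> 0%C ->
     e (m + k + 1)%nat = ((zb * e (m+k)%nat + beta * e m)/(D - e (m+k)%nat))%C) ->
  (forall n, (n <= k)%nat -> Cmod (e n) <= M) -> M <= c * Cmod D ->
  forall j n, (j * (k+1) <= n)%nat -> Cmod (e n) <= q ^ j * M.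
Proof.
  intros HD Hc Hq Hq1 Hrec Hinit HM.
  assert (Hq0 : 0 <= q).
  { rewrite Hq. assert (0 < Cmod D) by (apply Cmod_gt_0; auto).
    apply Rmult_le_pos. assert (H1 := Cmod_ge_0 zb). assert (H2 := Cmod_ge_0 beta). lra.
    left. apply Rinv_0_lt_compat. nra. }
  assert (HM0 : 0 <= M) by (specialize (Hinit 0%nat ltac:(lia)); assert (H:=Cmod_ge_0 (e 0%nat)); lra).
  assert (Hpow : forall j, q ^ j <= 1).
  { intro j. rewrite <- (pow1 j). apply pow_incr. lra. }
  intro j. induction j; intros n Hn.
  - simpl. rewrite Rmult_1_l. induction n as [n IH] using (well_founded_induction Wf_nat.lt_wf).
    destruct (Compare_dec.le_lt_dec n k). apply Hinit; auto.
    replace n with (n - k - 1 + k + 1)%nat by lia.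
    set (m := (n - k - 1)%nat).
    assert (H1 : Cmod (e (m + k)%nat) <= M) by (apply IH; lia).
    assert (H2 : Cmod (e m) <= M) by (apply IH; lia).
    destruct (step zb beta D (e (m+k)%nat) (e m) M c HD Hc H1 H2 HM) as [Hne Hb].
    rewrite Hrec; auto. rewrite <- Hq in Hb. nra.
  - replace n with (n - k - 1 + k + 1)%nat by (simpl in Hn; lia).
    set (m := (n - k - 1)%nat).
    assert (H1 : Cmod (e (m + k)%nat) <= q^j * M) by (apply IHj; simpl in Hn; lia).
    assert (H2 : Cmod (e m) <= q^j*M) by (apply IHj; simpl in Hn; lia).
    assert (HB : q ^ j * M <= c * Cmod D) by (specialize (Hpow j); nra).
    destruct (step zb beta D (e (m+k)%nat) (e m) (q^j*M) c HD Hc H1 H2 HB) as [Hne Hb].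
    rewrite Hrec; auto. rewrite <- Hq in Hb. simpl. nra.
Qed.

Theorem theorem2p1 (alpha beta gamma s : C) (k : nat) :
  (s * s)%C = ((beta - gamma) * (beta - gamma) - 4 * alpha)%C ->
  (s + beta + gamma)%C <> 0%C ->
  (alpha + beta * gamma)%C <> 0%C ->
  Cmod ((2 * beta) / (s + beta + gamma))%C
    + Cmod ((gamma * (- s - beta + gamma) - 2 * alpha) / (2 * (alpha + beta * gamma)))%C < 1 ->
  let zb := (/ 2 * (- s - beta + gamma))%C in
  is_fixed_point alpha beta gamma zb /\ loc_asympt_stable alpha beta gamma k zb.
Proof.
  intros Hs Hsbg Hab Hlt zb.
  assert (H2 : (2 : C) <> 0%C).
  { intro E. apply (f_equal fst) in E. simpl in E. lra. }
  set (D := (gamma - zb)%C).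
  assert (HDe : D = (/2 * (s + beta + gamma))%C) by (unfold D, zb; field; auto).
  assert (HD : D <> 0%C).
  { rewrite HDe. intro E. apply Hsbg.
    replace (s + beta + gamma)%C with (2 * (/2 * (s+beta+gamma)))%C by (field; auto).
    rewrite E. ring. }
  assert (Hquad : (zb * zb + (beta - gamma) * zb + alpha)%C = 0%C).
  { replace (zb * zb + (beta - gamma) * zb + alpha)%C
      with (/4 * (s*s - ((beta - gamma) * (beta - gamma) - 4 * alpha)))%C.
    rewrite Hs. ring. unfold zb. field; auto. }
  assert (Halpha : alpha = (- (zb * zb + (beta - gamma) * zb))%C).
  { rewrite <- (Cplus_0_l (- _)%C), <- Hquad. ring. }
  assert (HDg : (gamma - zb)%C <> 0%C) by exact HD.
  split.
  { unfold is_fixed_point. rewrite Halpha. field. auto. }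
  assert (Ha : Cmod ((gamma * (- s - beta + gamma) - 2 * alpha) / (2 * (alpha + beta * gamma)))%C
               = Cmod zb / Cmod D).
  { rewrite <- Cmod_div; auto. f_equal.
    replace (- s - beta + gamma)%C with (2 * zb)%C by (unfold zb; field; auto).
    assert (Hab' : (alpha + beta * gamma)%C <> 0%C) by auto.
    rewrite Halpha in Hab' |- *. unfold D. field. split; auto. }

  assert (Hb : Cmod ((2 * beta) / (s + beta + gamma))%C = Cmod beta / Cmod D).
  { rewrite <- Cmod_div; auto. f_equal. rewrite HDe. field; auto. }
  rewrite Ha, Hb in Hlt.
  assert (HDp : 0 < Cmod D) by (apply Cmod_gt_0; auto).
  set (p := (Cmod zb + Cmod beta) / Cmod D).
  assert (Hp : p < 1) by (unfold p; unfold Rdiv in *; lra).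
  assert (Hp0 : 0 <= p).
  { unfold p. apply Rmult_le_pos. assert (H1 := Cmod_ge_0 zb). assert (H3 := Cmod_ge_0 beta). lra.
    left. apply Rinv_0_lt_compat. lra. }
  set (c := (1 - p) / 2).
  assert (Hc : 0 <= c < 1) by (unfold c; lra).
  set (q := (Cmod zb + Cmod beta)/(Cmod D*(1-c))).
  assert (Hqe : q = p / (1 - c)) by (unfold q, p; field; unfold c; lra).
  assert (Hq1 : q < 1).
  { rewrite Hqe. apply Rmult_lt_reg_r with (1 - c). unfold c; lra.
    unfold Rdiv. rewrite Rmult_assoc, Rinv_l by (unfold c; lra). unfold c; lra. }
  assert (Hq0 : 0 <= q) by (rewrite Hqe; unfold Rdiv; apply Rmult_le_pos; auto; left;
                            apply Rinv_0_lt_compat; unfold c; lra).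
  assert (Key : forall x : nat -> C, is_solution alpha beta gamma k x ->
            init_dist k x zb < c * Cmod D ->
            forall j n, (j * (k+1) <= n)%nat -> Cmod (x n - zb)%C <= q ^ j * init_dist k x zb).
  { intros x Hx Hi j n Hn.
    apply (decay zb beta D k (fun n => x n - zb)%C (init_dist k x zb) c q HD Hc
             eq_refl (Rlt_le _ _ Hq1)); auto.
    - intros m Hne. simpl. rewrite Hx.
      assert (Hg : (gamma - x (m + k)%nat)%C <> 0%C).
      { intro E. apply Hne. unfold D. rewrite <- E. ring. }
      unfold D. rewrite Halpha. field. exact Hne.

    - intros i Hik. unfold init_dist.
      apply (sum_ge_term (fun i => Cmod (x i - zb)%C)); auto.
      intro; apply Cmod_ge_0.
    - lra. }
  assert (Hcd : 0 < c * Cmod D) by (unfold c; nra).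
  split.
  - intros eps Heps. exists (Rmin eps (c * Cmod D)). split.
    apply Rmin_glb_lt; lra.
    intros x Hx Hi n.
    assert (Hi1 := Rmin_l eps (c * Cmod D)). assert (Hi2 := Rmin_r eps (c * Cmod D)).
    assert (H := Key x Hx ltac:(lra) 0%nat n ltac:(lia)). simpl in H. lra.
  - exists (c * Cmod D). split; auto.
    intros x Hx Hi eps Heps.
    set (M := init_dist k x zb).
    assert (HM0 : 0 <= M).
    { assert (H := Key x Hx Hi 0%nat 0%nat ltac:(lia)).
      assert (H' := Cmod_ge_0 (x 0%nat - zb)%C). simpl in H. unfold M; lra. }
    destruct (pow_lt_1_zero q ltac:(rewrite Rabs_right; lra) (eps / (M + 1))
               ltac:(apply Rdiv_lt_0_compat; lra)) as [J HJ].
    exists (J * (k+1))%nat. intros n Hn.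
    assert (H := Key x Hx Hi J n Hn).
    specialize (HJ J ltac:(lia)). rewrite Rabs_right in HJ by (apply Rle_ge, pow_le; lra).
    assert (Hqj : 0 <= q ^ J) by (apply pow_le; lra).
    assert (q ^ J * (M + 1) < eps).
    { apply Rmult_lt_reg_r with (/ (M+1)). apply Rinv_0_lt_compat; lra.
      rewrite Rmult_assoc, Rinv_r by lra. lra. }
    fold M in H. nra.
Qed.
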